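(* Let $h\ge1$, $n$ and $m_{\mathrm H}$ be fixed, let $\gamma=(m_{\mathrm H}/n)^{1/(h+1)}$, and for $i\in\mathbb{N}$ let $(\ell_i,s_i)=(i,\mathrm{round}(\gamma i)+1)$. Then $$t_{\mathrm{new}}(\ell_i,s_i)=n\Big(1-\big(\tfrac{m_{\mathrm H}}{n}\big)^{\frac{h}{h+1}}-O(\tfrac1i)\Big)\quad (i\to\infty),$$ where for positive integers $s\le\ell$, $$t_{\mathrm{new}}(\ell,s)=n\Big(1-\frac{sC_{<s}-W_{<s}}{sC_{\le\ell}}\Big)-\frac{h}{h+1}\frac{\ell}{s}m_{\mathrm H}+\frac1s\Big(\frac{1}{C_{\le\ell}}-1\Big).$$
   Context: Here $q$ is a prime power, $n=q^3$, $g=\tfrac12q(q-1)$, and $m_{\mathrm H}$ is an integer with $2(g-1)<m_{\mathrm H}<n$ (so $0<\gamma<1$); $h\ge1$ is an integer. $\mathrm{round}(x)$ denotes the nearest integer to $x$. Counting quantities (over $\mathbb{Z}_{\ge0}^h$, with $|\mathbf{i}|=\sum_\mu i_\mu$): $C_{\le\ell}=\#\{\mathbf{j}\in\mathbb{Z}_{\ge0}^h:|\mathbf{j}|\le\ell\}$, $C_{<s}=\#\{\mathbf{i}\in\mathbb{Z}_{\ge0}^h:|\mathbf{i}|<s\}$, $W_{<s}=\sum_{\mathbf{i}\in\mathbb{Z}_{\ge0}^h,|\mathbf{i}|<s}|\mathbf{i}|$. *)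

(* Defs.v *)
From mathcomp Require Import all_boot.
From Stdlib Require Import Reals.
Set Implicit Arguments. Unset Strict Implicit. Unset Printing Implicit Defensive.

Definition prime_power (q : nat) : Prop :=
  exists p k : nat, prime p /\ (0 < k)%N /\ q = (p ^ k)%N.

(* |i| for i : Z_{>=0}^h, with components bounded by b (bound chosen large
   enough that no tuple with the relevant constraint on |i| is excluded). *)
Definition absi (h b : nat) (f : {ffun 'I_h -> 'I_b}) : nat :=
  (\sum_(k < h) (f k : nat))%N.

(* C_{<=l} = #{ j in Z_{>=0}^h : |j| <= l }  (components automatically <= l) *)
Definition C_le (h l : nat) : nat :=
  #|[pred f : {ffun 'I_h -> 'I_l.+1} | (absi f <= l)%N]|.

(* C_{<s} = #{ i in Z_{>=0}^h : |i| < s }  (components automatically < s) *)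
Definition C_lt (h s : nat) : nat :=
  #|[pred f : {ffun 'I_h -> 'I_s} | (absi f < s)%N]|.

Definition W_lt (h s : nat) : nat :=
  (\sum_(f : {ffun 'I_h -> 'I_s} | (absi f < s)%N) absi f)%N.

(* floor and nearest-integer rounding (ties rounded up) on reals *)
Definition Rfloor (x : R) : Z := (up x - 1)%Z.
Definition round (x : R) : Z := Rfloor (x + / 2)%R.

Definition t_new (n mH h l s : nat) : R :=
  (INR n * (1 - (INR s * INR (C_lt h s) - INR (W_lt h s)) / (INR s * INR (C_le h l)))
   - (INR h / INR (h + 1)) * (INR l / INR s) * INR mH
   + / INR s * (/ INR (C_le h l) - 1))%R.

Definition gamma (n mH h : nat) : R := Rpower (INR mH / INR n) (/ INR (h + 1)).

(* s_i = round(gamma i) + 1 ; gamma i >= 0 so round is a nonnegative integer *)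
Definition s_seq (n mH h i : nat) : nat := (Z.to_nat (round (gamma n mH h * INR i)) + 1)%N.

(* Main.v *)
Require Import Defs.
From mathcomp Require Import all_boot.
From Stdlib Require Import Reals.
From Stdlib Require Import Lra.
From mathcomp.zify Require Import zify_ssreflect.
From Stdlib Require ZArith.
Set Implicit Arguments.

Section Comb.

Definition fcons h b (p : 'I_b * {ffun 'I_h -> 'I_b}) : {ffun 'I_h.+1 -> 'I_b} :=
  [ffun j => oapp p.2 p.1 (unlift ord0 j)].
Definition fdecons h b (f : {ffun 'I_h.+1 -> 'I_b}) : 'I_b * {ffun 'I_h -> 'I_b} :=
  (f ord0, [ffun j => f (lift ord0 j)]).

Lemma fcons_bij h b : bijective (@fcons h b).
Proof.
exists (@fdecons h b).
  move=> [a g]; rewrite /fdecons /fcons /=; congr (_, _).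
    by rewrite ffunE unlift_none.
  by apply/ffunP => j; rewrite !ffunE liftK.
move=> f; apply/ffunP => j; rewrite /fdecons /fcons ffunE /=.
by case: unliftP => [j'|] -> /=; rewrite ?ffunE.
Qed.

Lemma absi_fcons h b p : absi (@fcons h b p) = (p.1 + absi p.2)%N.
Proof.
rewrite /absi big_ord_recl /fcons ffunE unlift_none /=; congr (_ + _)%N.
by apply: eq_bigr => j _; rewrite ffunE liftK.
Qed.

Lemma hockey h k : (\sum_(j < k.+1) 'C(j + h - 1, j) = 'C(k + h, k))%N.
Proof.
elim: k => [|k IH]; first by rewrite big_ord1 /= !bin0.
rewrite big_ord_recr /= IH.
have -> : (k.+1 + h - 1 = k + h)%N by lia.
by rewrite addSn binS addnC.
Qed.

Lemma hockey_rev h k : (\sum_(a < k.+1) 'C(k - a + h - 1, k - a) = 'C(k + h, k))%N.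
Proof.
elim: k => [|k IH]; first by rewrite big_ord1 /= !bin0.
rewrite big_ord_recl /=.
under eq_bigr => a _ do rewrite /bump /= add1n subSS.
rewrite IH subn0.
have -> : (k.+1 + h - 1 = k + h)%N by lia.
by rewrite addSn binS addnC.
Qed.

Lemma cnt_eq h b k : (k < b)%N ->
  (\sum_(f : {ffun 'I_h -> 'I_b}) (absi f == k) = 'C(k + h - 1, k))%N.
Proof.
elim: h k => [|h IH] k kb.
  rewrite (eq_bigr (fun _ => (k == 0)%N : nat)); last first.
    by move=> f _; rewrite /absi big_ord0 eq_sym.
  rewrite sum_nat_const card_ffun !card_ord expn0.
  case: k {kb} => [|k] /=; first by rewrite bin0.
  by rewrite muln0 addn0 subn1 /= bin_small.
rewrite (reindex (@fcons h b)) /=; last exact: onW_bij (fcons_bij h b).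
rewrite -(pair_bigA _ (fun (a : 'I_b) (g : {ffun 'I_h -> 'I_b}) => (absi (fcons (a, g)) == k) : nat)) /=.
transitivity (\sum_(a < b) if (a <= k)%N then 'C(k - a + h - 1, k - a) else 0)%N.
  apply: eq_bigr => a _.
  under eq_bigr => g _ do rewrite absi_fcons /=.
  case: (leqP a k) => ak.
    rewrite -IH; last by apply: leq_ltn_trans (leq_subr _ _) kb.
    apply: eq_bigr => g _; congr (nat_of_bool _).
    apply/eqP/eqP; lia.
  by apply: big1 => g _; apply/eqP; rewrite eqb0; apply/eqP; lia.
rewrite -big_mkcond /=.
have -> : (k + h.+1 - 1 = k + h)%N by lia.
rewrite -(hockey_rev h k) (big_ord_widen b (fun a => 'C(k - a + h - 1, k - a))) //.
Qed.

End Comb.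

Lemma sum_ind_eq (x l : nat) (F : nat -> nat) :
  (\sum_(k < l.+1) (x == k) * F k = (x <= l) * F x)%N.
Proof.
elim: l => [|l IH]; first by rewrite big_ord1; case: x => [|x] //=; rewrite mul0n.
rewrite big_ord_recr /= IH.
case: (ltngtP x l.+1) => H /=.
- have -> : (x <= l) by []. by rewrite mul0n addn0.
- have -> : (x <= l) = false by lia. by [].
- by subst x; rewrite ltnn mul0n add0n.
Qed.

Lemma sum_le h b l (F : nat -> nat) : (l < b)%N ->
  (\sum_(f : {ffun 'I_h -> 'I_b} | absi f <= l) F (absi f) =
   \sum_(k < l.+1) F k * 'C(k + h - 1, k))%N.
Proof.
move=> lb.
transitivity (\sum_(k < l.+1) \sum_(f : {ffun 'I_h -> 'I_b}) (absi f == k) * F k)%N.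
  rewrite exchange_big [LHS]big_mkcond; apply: eq_bigr => f _.
  rewrite (sum_ind_eq (absi f) l F).
  by case: (absi f <= l)%N; rewrite ?mul1n ?mul0n.
apply: eq_bigr => k _.
rewrite -big_distrl cnt_eq; first by rewrite mulnC.
by apply: leq_ltn_trans lb; rewrite -ltnS.
Qed.

Lemma C_le_eq h l : C_le h l = 'C(l + h, l).
Proof.
rewrite /C_le -sum1_card.
rewrite (eq_bigl (fun f => absi f <= l)%N); last by move=> f; rewrite inE.
rewrite (@sum_le h _ _ (fun _ => 1%N)) //.
rewrite -hockey; apply: eq_bigr => k _; by rewrite mul1n.
Qed.

Lemma C_lt_eq h t : C_lt h t.+1 = (\sum_(k < t.+1) 'C(k + h - 1, k))%N.
Proof.
rewrite /C_lt -sum1_card.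
rewrite (eq_bigl (fun f => absi f <= t)%N); last by move=> f; rewrite inE.
rewrite (@sum_le h _ _ (fun _ => 1%N)) //.
apply: eq_bigr => k _; by rewrite mul1n.
Qed.

Lemma W_lt_eq h t : W_lt h t.+1 = (\sum_(k < t.+1) k * 'C(k + h - 1, k))%N.
Proof.
rewrite /W_lt.
rewrite (eq_bigl (fun f => absi f <= t)%N); last by move=> f.
by rewrite (@sum_le h _ _ (fun x : nat => x)).
Qed.

Lemma D_eq h t : (\sum_(k < t.+1) (t.+1 - k) * 'C(k + h - 1, k) = 'C(t + h.+1, t))%N.
Proof.
elim: t => [|t IH]; first by rewrite big_ord1 /= !bin0.
rewrite big_ord_recr /= subSnn mul1n.
transitivity ((\sum_(i < t.+1) (t.+1 - i) * 'C(i + h - 1, i)) +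
   ((\sum_(i < t.+1) 'C(i + h - 1, i)) + 'C(t.+1 + h - 1, t.+1)))%N.
  rewrite addnA -big_split /=; congr (_ + _)%N.
  apply: eq_bigr => i _. have := ltn_ord i => Hi.
  have -> : (t.+2 - i = (t.+1 - i) + 1)%N by lia. by rewrite mulnDl mul1n.
have := hockey h t.+1; rewrite big_ord_recr /= => ->.
rewrite IH.
have -> : (t.+1 + h.+1 = (t + h.+1).+1)%N by lia.
rewrite binS addnC. congr (_ + _)%N. congr 'C(_, _). lia.
Qed.

Lemma sCW h t : ((t.+1) * C_lt h t.+1 = W_lt h t.+1 + 'C(t + h.+1, t))%N.
Proof.
rewrite C_lt_eq W_lt_eq -D_eq big_distrr -big_split /=.
apply: eq_bigr => i _. have := ltn_ord i => Hi.
rewrite -mulnDl; congr (_ * _)%N; lia.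
Qed.

Lemma leq_expl a b e : (a <= b)%N -> (expn a e <= expn b e)%N.
Proof. move=> ab; elim: e => [|e IH] //; rewrite !expnS; exact: leq_mul. Qed.

Lemma binom_bounds n k : (expn n k <= k`! * 'C(n + k, k) <= expn (n + k) k)%N.
Proof.
elim: k => [|k IH]; first by rewrite fact0 bin0 !expn0.
have E : (k.+1`! * 'C(n + k.+1, k.+1) = (n + k.+1) * (k`! * 'C(n + k, k)))%N.
  have := mul_bin_diag (n + k.+1) k; rewrite addnS /= => M.
  by rewrite factS [k.+1 * _]mulnC -mulnA -M mulnCA.
rewrite E; case/andP: IH => H1 H2; apply/andP; split.
  rewrite expnS; apply: leq_mul => //; lia.
rewrite [in X in (_ <= X)%N]expnS; apply: leq_mul => //.
apply: leq_trans H2 _; apply: leq_expl; lia.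
Qed.


Section RealPart.
Local Open Scope R_scope.

Lemma absle x b : -b <= x <= b <-> Rabs x <= b.
Proof. split; [apply Rabs_le|]. unfold Rabs; destruct Rcase_abs; lra. Qed.

Lemma powdiff (k : nat) a b Mx : 0 <= a <= Mx -> 0 <= b <= Mx -> 1 <= Mx ->
  Rabs (a ^ k - b ^ k) <= INR k * Mx ^ k * Rabs (a - b).
Proof.
intros Ha Hb HM. induction k as [|k IH].
- simpl. rewrite Rminus_diag Rabs_R0. lra.
- replace (a ^ S k - b ^ S k) with (a * (a ^ k - b ^ k) + b ^ k * (a - b)) by (simpl; ring).
  eapply Rle_trans; [apply Rabs_triang|].
  rewrite !Rabs_mult (Rabs_right a); last lra.
  rewrite (Rabs_right (b ^ k)); last (apply Rle_ge, pow_le; lra).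
  assert (H1 : b ^ k <= Mx ^ k) by (apply pow_incr; lra).
  assert (H2 : Mx ^ k <= Mx ^ S k) by (simpl; assert (0 <= Mx ^ k) by (apply pow_le; lra); nra).
  assert (H0 : 0 <= Rabs (a - b)) by apply Rabs_pos.
  assert (H3 : 0 <= INR k) by apply pos_INR.
  assert (H4 : 0 <= Mx ^ k) by (apply pow_le; lra).
  rewrite S_INR. simpl (Mx ^ S k) in *.
  assert (a * Rabs (a ^ k - b ^ k) <= Mx * (INR k * Mx ^ k * Rabs (a - b))).
  { apply Rmult_le_compat; try lra. apply Rabs_pos. }
  assert (b ^ k * Rabs (a - b) <= Mx * Mx ^ k * Rabs (a-b)) by nra.
  nra.
Qed.

Lemma le_div_L a c L : 0 < L -> a * L <= c -> a <= c / L.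
Proof. intros HL H. apply (Rmult_le_reg_r L); [lra|]. unfold Rdiv. rewrite Rmult_assoc Rinv_l; lra. Qed.

Lemma pow_le1 u k : 0 <= u <= 1 -> u ^ k <= 1.
Proof. intros. rewrite -(pow1 k). apply pow_incr. lra. Qed.

Lemma X_bounds (h : nat) (g L S Qf P : R) :
  let hh := INR h in
  0 < g < 1 -> 1 <= hh -> hh + 2 <= L ->
  g * L + / 2 <= S <= g * L + 3 / 2 -> 1 <= S ->
  L ^ h <= Qf <= (L + hh) ^ h ->
  (S - 1) ^ (Nat.succ h) <= P <= (S + hh) ^ (Nat.succ h) ->
  Rabs (P / (S * Qf) - g ^ h) <=
    (hh * (hh + 1) + / g + hh * 2 ^ h * (hh + 2) + hh * 2 ^ h / g) / L.
Proof.
intros hh Hg Hh HL HS HS1 HQ HP.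
assert (L0 : 0 < L) by lra.
assert (gL0 : 0 < g * L) by (apply Rmult_lt_0_compat; lra).
assert (gLL : g * L <= L) by (assert (0 <= (1-g)*L) by (apply Rmult_le_pos; lra); lra).
assert (S0 : 0 < S) by lra.
assert (ghh : 0 <= g * hh <= hh) by (split; [apply Rmult_le_pos; lra| assert (0 <= (1-g)*hh) by (apply Rmult_le_pos; lra); lra]).
assert (Lh0 : 0 < L ^ h) by (apply pow_lt; lra).
assert (Q0 : 0 < Qf) by lra.
assert (invS : / S <= / g / L).
{ unfold Rdiv; rewrite -Rinv_mult. apply Rinv_le_contravar; nra. }
assert (gh1 : g ^ h <= 1) by (apply pow_le1; lra).
assert (gh0 : 0 <= g ^ h) by (apply pow_le; lra).
assert (Hinvg : 0 < / g) by (apply Rinv_0_lt_compat; lra).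
set (u := (S - 1) / (L + hh)).
assert (Hu : S - 1 = u * (L + hh)) by (unfold u; field; lra).
assert (Hu01 : 0 <= u <= 1).
{ split.
  - unfold u; apply Rmult_le_pos; [lra|]. apply Rlt_le, Rinv_0_lt_compat; lra.
  - apply Rmult_le_reg_r with (L + hh); [lra|]. rewrite -Hu. nra. }
assert (Hug : Rabs (u - g) <= (hh + 1) / L).
{ apply le_div_L; [lra|].
  assert (E : Rabs (u - g) * (L + hh) = Rabs (S - 1 - g * (L + hh))).
  { rewrite Hu. replace (u * (L + hh) - g * (L + hh)) with ((u - g) * (L + hh)) by ring.
    rewrite Rabs_mult (Rabs_right (L + hh)); [ring|lra]. }
  assert (Rabs (S - 1 - g * (L + hh)) <= hh + 1) by (apply Rabs_le; split; lra).
  assert (0 <= Rabs (u - g)) by apply Rabs_pos. nra. }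
assert (Hlow : (S - 1) * u ^ h / S <= P / (S * Qf)).
{ assert (E : P / (S * Qf) - (S - 1) * u ^ h / S = (P - (S - 1) * u ^ h * Qf) * / (S * Qf))
    by (field; lra).
  assert (0 <= P - (S - 1) * u ^ h * Qf).
  { assert (E2 : (S - 1) ^ (Nat.succ h) = (S - 1) * u ^ h * (L + hh) ^ h).
    { rewrite -tech_pow_Rmult. replace ((S - 1) ^ h) with ((u * (L + hh)) ^ h) by (rewrite -Hu; reflexivity). rewrite Rpow_mult_distr. ring. }
    assert (0 <= (S - 1) * u ^ h).
    { apply Rmult_le_pos; [nra|apply pow_le; lra]. }
    nra. }
  assert (0 < / (S * Qf)) by (apply Rinv_0_lt_compat; nra).
  nra. }
assert (Hpu := @powdiff h u g 1 Hu01 (conj (Rlt_le _ _ (proj1 Hg)) (Rlt_le _ _ (proj2 Hg))) (Rle_refl 1)).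
rewrite pow1 Rmult_1_r in Hpu.
assert (uh1 : u ^ h <= 1) by (apply pow_le1; lra).
assert (uh0 : 0 <= u ^ h) by (apply pow_le; lra).
assert (Elow : (S - 1) * u ^ h / S = u ^ h - u ^ h * / S) by (field; lra).
set (v := (S + hh) / L).
assert (Hv : S + hh = v * L) by (unfold v; field; lra).
assert (Hv02 : 0 <= v <= 2).
{ split.
  - unfold v; apply Rmult_le_pos; [lra|]. apply Rlt_le, Rinv_0_lt_compat; lra.
  - apply Rmult_le_reg_r with L; [lra|]. rewrite -Hv. lra. }
assert (Hvg : Rabs (v - g) <= (hh + 2) / L).
{ apply le_div_L; [lra|].
  assert (E : Rabs (v - g) * L = Rabs (S + hh - g * L)).
  { rewrite Hv. replace (v * L - g * L) with ((v - g) * L) by ring.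
    rewrite Rabs_mult (Rabs_right L); [ring|lra]. }
  assert (Rabs (S + hh - g * L) <= hh + 2) by (apply Rabs_le; split; lra).
  lra. }
assert (Hup : P / (S * Qf) <= (S + hh) * v ^ h / S).
{ assert (E : (S + hh) * v ^ h / S - P / (S * Qf) = ((S + hh) * v ^ h * Qf - P) * / (S * Qf))
    by (field; lra).
  assert (0 <= (S + hh) * v ^ h * Qf - P).
  { assert (E2 : (S + hh) ^ (Nat.succ h) = (S + hh) * v ^ h * L ^ h).
    { rewrite -tech_pow_Rmult. replace ((S + hh) ^ h) with ((v * L) ^ h) by (rewrite -Hv; reflexivity). rewrite Rpow_mult_distr. ring. }
    assert (0 <= (S + hh) * v ^ h).
    { apply Rmult_le_pos; [lra|apply pow_le; lra]. }
    nra. }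
  assert (0 < / (S * Qf)) by (apply Rinv_0_lt_compat; nra).
  nra. }
assert (Hpv := @powdiff h v g 2 Hv02 ltac:(lra) ltac:(lra)).
assert (vh2 : v ^ h <= 2 ^ h) by (apply pow_incr; lra).
assert (vh0 : 0 <= v ^ h) by (apply pow_le; lra).
assert (Eup : (S + hh) * v ^ h / S = v ^ h + hh * v ^ h * / S) by (field; lra).
assert (p2 : 1 <= 2 ^ h) by (apply pow_R1_Rle; lra).
apply absle in Hpu. apply absle in Hpv. fold hh in Hpu, Hpv.
assert (Hh0 : 0 <= hh) by lra.
replace ((hh * (hh + 1) + / g + hh * 2 ^ h * (hh + 2) + hh * 2 ^ h / g) / L) with
  (hh * ((hh + 1) / L) + / g / L + hh * 2 ^ h * ((hh + 2) / L) + hh * 2 ^ h * (/ g / L))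
  by (field; lra).
assert (0 <= / S) by (apply Rlt_le, Rinv_0_lt_compat; lra).
assert (hv1 : hh * Rabs (u - g) <= hh * ((hh + 1) / L)) by (apply Rmult_le_compat_l; lra).
assert (hv2 : hh * 2 ^ h * Rabs (v - g) <= hh * 2 ^ h * ((hh + 2) / L)) by (apply Rmult_le_compat_l; nra).
assert (hv3 : u ^ h * / S <= / g / L) by nra.
assert (hv4 : hh * v ^ h * / S <= hh * 2 ^ h * (/ g / L)).
{ apply Rmult_le_compat; try nra. }
assert (0 <= (hh + 1) / L) by (unfold Rdiv; apply Rmult_le_pos; [lra|apply Rlt_le, Rinv_0_lt_compat; lra]).
assert (0 <= (hh + 2) / L) by (unfold Rdiv; apply Rmult_le_pos; [lra|apply Rlt_le, Rinv_0_lt_compat; lra]).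
assert (0 <= / g / L) by (unfold Rdiv; apply Rmult_le_pos; apply Rlt_le, Rinv_0_lt_compat; lra).
apply Rabs_le. split.
- assert (hh * 2 ^ h * ((hh + 2) / L) >= 0) by nra.
  assert (hh * 2 ^ h * (/ g / L) >= 0) by nra.
  lra.
- assert (hh * ((hh + 1) / L) >= 0) by nra.
  lra.
Qed.

Lemma final_real (h : nat) (N Mm g L S Q D F : R) :
  let hh := INR h in
  0 < N -> Mm = N * g ^ (Nat.succ h) -> 0 < g < 1 -> 1 <= hh -> hh + 2 <= L ->
  g * L + / 2 <= S <= g * L + 3 / 2 -> 1 <= S -> 0 < F ->
  L ^ h <= F * Q <= (L + hh) ^ h ->
  (S - 1) ^ (Nat.succ h) <= (hh + 1) * F * D <= (S + hh) ^ (Nat.succ h) ->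
  1 <= Q ->
  Rabs (N * (1 - D / (S * Q)) - hh / (hh + 1) * (L / S) * Mm + / S * (/ Q - 1)
        - N * (1 - g ^ h))
  <= N * (((hh * (hh + 1) + / g + hh * 2 ^ h * (hh + 2) + hh * 2 ^ h / g)
           + 2 * hh / g + / (g * N)) / L).
Proof.
intros hh HN HM Hg Hh HL HS HS1 HF HQ HP HQ1.
set (K := hh * (hh + 1) + / g + hh * 2 ^ h * (hh + 2) + hh * 2 ^ h / g).
assert (L0 : 0 < L) by lra.
assert (gL0 : 0 < g * L) by (apply Rmult_lt_0_compat; lra).
assert (S0 : 0 < S) by lra.
assert (Q0 : 0 < Q) by lra.
assert (XB := @X_bounds h g L S (F * Q) ((hh + 1) * F * D) Hg Hh HL HS HS1 HQ HP).
fold hh K in XB.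
set (X := (hh + 1) * F * D / (S * (F * Q))) in XB.
assert (E : N * (1 - D / (S * Q)) - hh / (hh + 1) * (L / S) * Mm + / S * (/ Q - 1)
        - N * (1 - g ^ h) =
        N / (hh + 1) * ((g ^ h - X) + hh * g ^ h * (S - g * L) / S) + / S * (/ Q - 1)).
{ rewrite HM. unfold X. simpl (g ^ Nat.succ h). field. repeat split; lra. }
rewrite E.
assert (invS : / S <= / g / L).
{ unfold Rdiv; rewrite -Rinv_mult. apply Rinv_le_contravar; nra. }
assert (gh1 : g ^ h <= 1) by (apply pow_le1; lra).
assert (gh0 : 0 <= g ^ h) by (apply pow_le; lra).
assert (iS0 : 0 < / S) by (apply Rinv_0_lt_compat; lra).
assert (iQ : 0 < / Q <= 1).
{ split; [apply Rinv_0_lt_compat; lra|]. rewrite -Rinv_1. apply Rinv_le_contravar; lra. }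
set (B := hh * g ^ h * (S - g * L) / S).
assert (HB : 0 <= B <= 3 / 2 * hh * (/ g / L)).
{ unfold B, Rdiv. split.
  - repeat apply Rmult_le_pos; lra.
  - assert (0 <= hh * g ^ h) by (apply Rmult_le_pos; lra).
    assert (hh * g ^ h <= hh) by nra.
    assert (hh * g ^ h * (S - g * L) <= 3 / 2 * hh) by nra.
    assert (0 <= hh * g ^ h * (S - g * L)) by nra.
    replace (/ g * / L) with (/ g / L) by reflexivity.
    nra. }
assert (HC : - (/ g / L) <= / S * (/ Q - 1) <= 0) by nra.
apply absle in XB.
set (c := N / (hh + 1)).
assert (Hc : 0 < c <= N).
{ unfold c, Rdiv. split.
  - apply Rmult_lt_0_compat; [lra|apply Rinv_0_lt_compat; lra].
  - assert (/ (hh + 1) <= 1) by (rewrite -Rinv_1; apply Rinv_le_contravar; lra).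
    assert (0 < / (hh + 1)) by (apply Rinv_0_lt_compat; lra). nra. }
assert (KL0 : 0 <= K / L) by lra.
assert (U1 : c * (g ^ h - X + B) <= N * (K / L + 3 / 2 * hh * (/ g / L))).
{ assert (0 <= 3 / 2 * hh * (/ g / L)) by lra.
  assert (c * (g ^ h - X + B) <= c * (K / L + 3 / 2 * hh * (/ g / L))) by (apply Rmult_le_compat_l; lra).
  assert (c * (K / L + 3 / 2 * hh * (/ g / L)) <= N * (K / L + 3 / 2 * hh * (/ g / L))) by (apply Rmult_le_compat_r; lra).
  lra. }
assert (U2 : - (N * (K / L)) <= c * (g ^ h - X + B)).
{ assert (c * (- (K / L)) <= c * (g ^ h - X + B)) by (apply Rmult_le_compat_l; lra).
  assert (c * (K / L) <= N * (K / L)) by (apply Rmult_le_compat_r; lra).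
  lra. }
assert (EQ : N * ((K + 2 * hh / g + / (g * N)) / L) = N * (K / L) + 2 * N * hh * (/ g / L) + / g / L)
  by (field; lra).
rewrite EQ.
assert (0 <= N * hh * (/ g / L)).
{ apply Rmult_le_pos; [apply Rmult_le_pos; lra|]. unfold Rdiv; apply Rmult_le_pos; apply Rlt_le, Rinv_0_lt_compat; lra. }
apply Rabs_le; split; lra.
Qed.

End RealPart.

Lemma INR_muln (a b : nat) : INR (muln a b) = (INR a * INR b)%R.
Proof. exact (mult_INR a b). Qed.
Lemma INR_addn (a b : nat) : INR (addn a b) = (INR a + INR b)%R.
Proof. exact (plus_INR a b). Qed.
Lemma INR_expn (a k : nat) : INR (expn a k) = (INR a ^ k)%R.
Proof. elim: k => [|k IH] //=. by rewrite expnS INR_muln IH. Qed.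
Lemma INR_leq (a b : nat) : leq a b -> (INR a <= INR b)%R.
Proof. move/leP; exact: le_INR. Qed.

Lemma round_bounds y : (IZR (round y) > y - / 2)%R /\ (IZR (round y) <= y + / 2)%R.
Proof.
rewrite /round /Rfloor minus_IZR. have [H1 H2] := archimed (y + / 2). split; lra.
Qed.

Lemma gamma_facts (n mH h : nat) : (0 < mH)%N -> (mH < n)%N ->
  let g := gamma n mH h in
  (0 < g < 1)%R /\ (INR mH = INR n * g ^ (h.+1))%R /\
  Rpower (INR mH / INR n) (INR h / INR (h + 1)) = (g ^ h)%R.
Proof.
move=> m0 mn g.
have Hm : (0 < INR mH)%R by apply: lt_0_INR; apply/ltP.
have Hn : (INR mH < INR n)%R by apply: lt_INR; apply/ltP.
set x := (INR mH / INR n)%R.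
have Hx : (0 < x < 1)%R.
  rewrite /x; split; first by apply: Rdiv_lt_0_compat; lra.
  rewrite /x /Rdiv; have Hi : (0 < / INR n)%R by apply Rinv_0_lt_compat; lra.
  have : (INR mH * / INR n < INR n * / INR n)%R by apply Rmult_lt_compat_r.
  rewrite Rinv_r; lra.
have Hh1 : INR (h + 1) = (INR h + 1)%R by rewrite INR_addn.
have g0 : (0 < g)%R by rewrite /g /gamma /Rpower; apply: exp_pos.
split; [split|split].
- exact: g0.
- rewrite /g /gamma /Rpower -exp_0; apply: exp_increasing; rewrite -/x.
  have : (ln x < 0)%R by rewrite -ln_1; apply: ln_increasing; lra.
  have : (0 < / INR (h + 1))%R by apply: Rinv_0_lt_compat; rewrite Hh1; have := pos_INR h; lra.
  move=> H1 H2; nra.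
- rewrite -Rpower_pow // /g /gamma Rpower_mult S_INR -Hh1 Rinv_l.
    rewrite -/x Rpower_1; last lra. rewrite /x; field; lra.
  rewrite Hh1; have := pos_INR h; lra.
- rewrite -Rpower_pow // /g /gamma Rpower_mult; congr Rpower.
  rewrite /Rdiv; ring.
Qed.

Theorem theorem5 (q h mH : nat) :
  prime_power q -> (1 <= h)%N ->
  (2 * ((q * (q - 1)) %/ 2 - 1) < mH)%N -> (mH < q ^ 3)%N ->
  exists (C : R) (N : nat), forall i : nat, (N <= i)%N -> (0 < i)%N ->
    (1 <= s_seq (q ^ 3) mH h i <= i)%N /\
    (Rabs (t_new (q ^ 3) mH h i (s_seq (q ^ 3) mH h i)
           - INR (q ^ 3) * (1 - Rpower (INR mH / INR (q ^ 3)) (INR h / INR (h + 1))))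
     <= INR (q ^ 3) * (C / INR i))%R.
Proof.
move=> _ h1 Hm Hmn.
set n := (q ^ 3)%coq_nat in Hmn *.
have m0 : (0 < mH)%N by apply: leq_trans _ Hm.
have [[g0 g1] [HM HR]] := @gamma_facts n mH h m0 Hmn.
set g := gamma n mH h in g0 g1 HM HR *.
set hh := INR h.
have Hh : (1 <= hh)%R by exact (@INR_leq 1 h h1).
have Nr0 : (0 < INR n)%R by apply: lt_0_INR; apply/ltP; apply: leq_ltn_trans Hmn.
have Hh1 : INR (h + 1) = (hh + 1)%R by rewrite INR_addn.
have [N0 HN0] := INR_unbounded (hh + 2 + 3 / (2 * (1 - g)))%R.
exists ((hh * (hh + 1) + / g + hh * 2 ^ h * (hh + 2) + hh * 2 ^ h / g)
           + 2 * hh / g + / (g * INR n))%R, N0.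
move=> i Hi i0.
set L := INR i.
have HL : (INR N0 <= L)%R by apply: INR_leq.
have b0 : (0 < 3 / (2 * (1 - g)))%R.
  apply: Rdiv_lt_0_compat; lra.
have HL2 : (3 / 2 <= L * (1 - g))%R.
  have -> : (3 / 2 = 3 / (2 * (1 - g)) * (1 - g))%R by field; lra.
  apply: Rmult_le_compat_r; lra.
have HL3 : (g * L + 3 / 2 <= L)%R.
  have : (L * (1 - g) = L - g * L)%R by ring. lra.
have [r1 r2] := round_bounds (g * L).
set r := round (g * L) in r1 r2.
have gL0 : (0 <= g * L)%R by apply: Rmult_le_pos; lra.
have r0 : (0 <= r)%Z.
  have : (-1 < r)%Z by apply: lt_IZR; lra.
  move=> H; exact (proj1 (Z.lt_pred_le 0 r) H).
have r0' : (0 <= IZR r)%R by apply: IZR_le.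
set t := Z.to_nat r.
have Ht : INR t = IZR r by rewrite INR_IZR_INZ /t ZArith.Znat.Z2Nat.id.
have Hs : s_seq n mH h i = t.+1 by rewrite /s_seq addn1.
rewrite Hs.
have HS : INR t.+1 = (IZR r + 1)%R by rewrite S_INR Ht.
split.
  apply/andP; split => //.
  apply/leP; apply: INR_le; rewrite HS -/L; lra.
rewrite /t_new HR Hh1 C_le_eq.
have E := sCW h t.
have E' : (INR t.+1 * INR (C_lt h t.+1) - INR (W_lt h t.+1) = INR 'C(t + h.+1, t))%R.
  have : INR (t.+1 * C_lt h t.+1) = INR (W_lt h t.+1 + 'C(t + h.+1, t)) by rewrite E.
  rewrite INR_muln INR_addn; lra.
rewrite E'.
have Bq := binom_bounds i h.
rewrite -(bin_sub (leq_addl i h)) addnK in Bq.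
have Bd := binom_bounds t h.+1.
rewrite -(bin_sub (leq_addl t h.+1)) addnK factS in Bd.
case/andP: Bq => Bq1 Bq2. case/andP: Bd => Bd1 Bd2.
move/INR_leq: Bq1 => Bq1; move/INR_leq: Bq2 => Bq2; move/INR_leq: Bd1 => Bd1; move/INR_leq: Bd2 => Bd2.
rewrite !INR_expn !INR_muln !INR_addn ?S_INR in Bd2 Bd1 Bq2 Bq1.
rewrite -/hh -/L in Bd2 Bd1 Bq2 Bq1 *.
apply: (@final_real h (INR n) (INR mH) g L _ _ _ (INR h`!)); try rewrite -/hh.
- exact: Nr0.
- exact: HM.
- split; lra.
- exact: Hh.
- lra.
- rewrite HS; split; lra.
- rewrite HS; lra.
- apply: lt_0_INR; apply/ltP; exact: fact_gt0.
- split; lra.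
- rewrite HS. have -> : (IZR r + 1 - 1 = INR t)%R by rewrite Ht; ring.
  have -> : (IZR r + 1 + hh = INR t + (hh + 1))%R by rewrite Ht; ring.
  split; [exact Bd1 | exact Bd2].
- have H : (0 < 'C(i + h, i))%N by rewrite bin_gt0 leq_addr.
  exact (@INR_leq 1 _ H).
Qed.
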